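(* Let $\mathcal{I}$ be a finite set of items and $\mathcal{D}$ a transaction database over $\mathcal{I}$. Let $t_o \in \mathcal{D}$ be a transaction with itemset $T_o \subseteq \mathcal{I}$, and let $\mathcal{D}^- = \mathcal{D} \setminus \{t_o\}$. Then a closed itemset $c \in \mathcal{C}(\mathcal{D})$ fails to be closed in $\mathcal{D}^-$ (i.e. $c \in \mathcal{C}(\mathcal{D}) \setminus \mathcal{C}(\mathcal{D}^-)$) if and only if there exists $c_g \in \mathcal{C}(\mathcal{D})$ with $c = c_g \cap T_o$ and $\sigma_{\mathcal{D}}(c_g) = \sigma_{\mathcal{D}}(c) - 1$. In other words, $$\mathcal{C}(\mathcal{D}) \setminus \mathcal{C}(\mathcal{D}^-) = \{c \in \mathcal{C}(\mathcal{D}) \mid \exists c_g \in \mathcal{C}(\mathcal{D}) : c = c_g \cap T_o,\ \sigma_{\mathcal{D}}(c_g) = \sigma_{\mathcal{D}}(c) - 1\}.$$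
   Context: A transaction database $\mathcal{D}$ over a finite item set $\mathcal{I}$ is a finite set of transactions, each a pair $(j, Z)$ with $j$ a transaction identifier (tid, all tids distinct) and $Z \subseteq \mathcal{I}$ an itemset. For $X \subseteq \mathcal{I}$, its support set is $\tau_{\mathcal{D}}(X) = \{ j \mid (j,Z) \in \mathcal{D},\ X \subseteq Z\}$ and its support is $\sigma_{\mathcal{D}}(X) = |\tau_{\mathcal{D}}(X)|$. An itemset $X \subseteq \mathcal{I}$ is closed in $\mathcal{D}$ if no proper superset $Y \supsetneq X$ (with $Y \subseteq \mathcal{I}$) has $\sigma_{\mathcal{D}}(Y) = \sigma_{\mathcal{D}}(X)$; $\mathcal{C}(\mathcal{D})$ denotes the family of all closed itemsets of $\mathcal{D}$ (in particular $\mathcal{I}$ itself is always closed). A closed itemset of $\mathcal{D}$ that is not closed in $\mathcal{D}^-$ is called obsolete; a $c_g$ as in the claim is called a genitor of $c$. *)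

(* Defs.v *)
From mathcomp Require Import all_boot.
Set Implicit Arguments. Unset Strict Implicit. Unset Printing Implicit Defensive.

(* A transaction database over items I with tids in J: a finite set of pairs
   (tid, itemset); tids are required distinct separately (distinct_tids). *)
Definition db (J I : finType) := {set (J * {set I})}.

Definition distinct_tids (J I : finType) (D : {set (J * {set I})}) : Prop :=
  forall j (Z Z' : {set I}), (j, Z) \in D -> (j, Z') \in D -> Z = Z'.

Definition tau (J I : finType) (D : {set (J * {set I})}) (X : {set I}) : {set J} :=
  [set j : J | [exists Z : {set I}, ((j, Z) \in D) && (X \subset Z)]].

Definition sigma (J I : finType) (D : {set (J * {set I})}) (X : {set I}) : nat := #|tau D X|.

Definition is_closed (J I : finType) (D : {set (J * {set I})}) (X : {set I}) : bool :=
  [forall Y : {set I}, (X \proper Y) ==> (sigma D Y != sigma D X)].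

(* Main.v *)
Require Import Defs.
From mathcomp Require Import all_boot.
From mathcomp Require Import zify.
Set Implicit Arguments. Unset Strict Implicit.

Section Aux.
Variables (J I : finType) (D : {set (J * {set I})}).

Lemma tau_mono (X Y : {set I}) : X \subset Y -> tau D Y \subset tau D X.
Proof.
move=> HXY; apply/subsetP => j; rewrite !inE => /existsP [Z /andP[HZ HYZ]].
by apply/existsP; exists Z; rewrite HZ (subset_trans HXY HYZ).
Qed.

Lemma sigma_mono (X Y : {set I}) : X \subset Y -> sigma D Y <= sigma D X.
Proof. by move=> H; apply: subset_leq_card; apply: tau_mono. Qed.

Lemma closed_lt (X Y : {set I}) : is_closed D X -> X \proper Y -> sigma D Y < sigma D X.
Proof.
move=> /forallP /(_ Y) /implyP H HP.
by rewrite ltn_neqAle H // sigma_mono // proper_sub.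
Qed.

Variables (hD : distinct_tids D) (jo : J) (To : {set I}) (hto : (jo, To) \in D).

Lemma jo_tau (X : {set I}) : (jo \in tau D X) = (X \subset To).
Proof.
rewrite inE; apply/existsP/idP => [[Z /andP[HZ HX]]|HX].
  by rewrite -(hD HZ hto).
by exists To; rewrite hto HX.
Qed.

Lemma sigma_pos (X : {set I}) : X \subset To -> 0 < sigma D X.
Proof. by move=> H; apply/card_gt0P; exists jo; rewrite jo_tau. Qed.

Lemma tau_minus (X : {set I}) : tau (D :\ (jo, To)) X = tau D X :\ jo.
Proof.
apply/setP => j; rewrite !inE; apply/existsP/andP.
  case=> Z; rewrite !inE => /andP[/andP[Hne HZ] HX].
  split; last by apply/existsP; exists Z; rewrite HZ.
  apply/eqP => Ej; subst j; move: Hne; by rewrite (hD HZ hto) eqxx.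
case=> Hne /existsP[Z /andP[HZ HX]]; exists Z.
by rewrite !inE HZ HX andbT xpair_eqE (negbTE Hne).
Qed.

Lemma sigma_minus (X : {set I}) : sigma (D :\ (jo, To)) X = sigma D X - (X \subset To).
Proof.
by rewrite /sigma tau_minus (cardsD1 jo (tau D X)) jo_tau addKn.
Qed.

End Aux.

Theorem mainTheorem2 (J I : finType) (D : {set (J * {set I})}) (hD : distinct_tids D)
    (jo : J) (To : {set I}) (hto : (jo, To) \in D) (c : {set I}) :
  (is_closed D c /\ ~~ is_closed (D :\ (jo, To)) c) <->
  (is_closed D c /\ exists cg : {set I},
      [/\ is_closed D cg, c = cg :&: To & sigma D cg = sigma D c - 1]).
Proof.
split.
  case=> Hc Hn; split => //.
  move: Hn; rewrite /is_closed negb_forall => /existsP [Y].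
  rewrite negb_imply negbK => /andP[HcY /eqP HY].
  rewrite !(sigma_minus hD hto) in HY.
  have lt := closed_lt Hc HcY.
  have cY := proper_sub HcY.
  have [cT YT] : c \subset To /\ ~~ (Y \subset To).
    case: (boolP (c \subset To)) => cT; case: (boolP (Y \subset To)) => YT //;
      rewrite /= in HY.
    - have := sigma_pos hD hto YT; lia.
    - by rewrite (subset_trans cY YT) in cT.
    - lia.
  rewrite cT (negbTE YT) /= subn0 in HY.
  pose P := fun Z : {set I} => (Y \subset Z) && (sigma D Z == sigma D Y).
  have PY : P Y by rewrite /P subxx eqxx.
  case: (@arg_maxnP _ Y P (fun Z => #|Z|) PY) => cg /andP[Ycg /eqP Scg] Hmax.
  have cgT : ~~ (cg \subset To).
    by apply/negP => H; rewrite (subset_trans Ycg H) in YT.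
  exists cg; split.
  - apply/forallP => Z; apply/implyP => HZ; apply/negP => /eqP E.
    have PZ : P Z by rewrite /P (subset_trans Ycg (proper_sub HZ)) E Scg eqxx.
    have := Hmax Z PZ; have := proper_card HZ; lia.
  - have sub : c \subset cg :&: To by rewrite subsetI (subset_trans cY Ycg) cT.
    case: (eqVproper sub) => [//|Hp].
    have lt2 := closed_lt Hc Hp.
    have pos := sigma_pos hD hto cT.
    have : sigma D cg < sigma D (cg :&: To).
      rewrite /sigma (cardsD1 jo (tau D (cg :&: To))) (jo_tau hD hto) subsetIr.
      rewrite add1n ltnS; apply: subset_leq_card.
      by rewrite subsetD1 tau_mono ?subsetIl // (jo_tau hD hto).
    lia.
  - by rewrite Scg.
case=> Hc [cg [Hcg Ec Hs]]; split => //.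
have cT : c \subset To by rewrite Ec subsetIr.
have pos := sigma_pos hD hto cT.
have Hne : c != cg by apply/eqP => E; rewrite -E in Hs; lia.
have cgT : ~~ (cg \subset To).
  apply/negP => H; move: Hne; rewrite Ec.
  by rewrite (setIidPl H) eqxx.
rewrite /is_closed negb_forall; apply/existsP; exists cg.
rewrite negb_imply negbK; apply/andP; split.
  by rewrite properEneq Hne Ec subsetIl.
by apply/eqP; rewrite !(sigma_minus hD hto) cT (negbTE cgT) Hs subn0.
Qed.
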